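(* Let $\langle A,g\rangle$ be an interior algebra. If $A^*$ is a retract of $A$, then $A=A^*$.
   Context: An interior algebra is a Boolean algebra with an operator $g$ satisfying $g(1)=1$, $g(xy)=g(x)g(y)$, $g(x)\le x$, $gg(x)=g(x)$; $a$ is open if $g(a)=a$. $A^*$ denotes the subalgebra of $A$ generated by the open elements of $A$. $A^*$ is a retract of $A$ if there is a surjective homomorphism $p\colon A\to A^*$ whose restriction to $A^*$ is the identity. *)

(* Defs.v *)
From HB Require Import structures.
From mathcomp Require Import all_boot all_order.
Set Implicit Arguments. Unset Strict Implicit. Unset Printing Implicit Defensive.
Import Order.Theory.
Local Open Scope order_scope.

(* A Boolean algebra is a complemented (top/bottom) distributive lattice:
   ctbDistrLatticeType d.  An interior operator g on it: *)
Definition interior_op d (A : ctbDistrLatticeType d) (g : A -> A) : Prop :=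
  [/\ g \top = \top,
      (forall x y, g (x `&` y) = g x `&` g y),
      (forall x, g x <= x) &
      (forall x, g (g x) = g x)].

Definition is_open d (A : ctbDistrLatticeType d) (g : A -> A) (a : A) : Prop :=
  g a = a.

Inductive Astar d (A : ctbDistrLatticeType d) (g : A -> A) : A -> Prop :=
  | Astar_open a : is_open g a -> Astar g a
  | Astar_top : Astar g \top
  | Astar_bot : Astar g \bot
  | Astar_compl a : Astar g a -> Astar g (~` a)
  | Astar_meet a b : Astar g a -> Astar g b -> Astar g (a `&` b)
  | Astar_join a b : Astar g a -> Astar g b -> Astar g (a `|` b).

(* Homomorphism of interior algebras (Boolean operations and g preserved),
   here as a map A -> A (its target being A^* with the restricted operator). *)
Definition interior_hom d (A : ctbDistrLatticeType d) (g : A -> A) (p : A -> A) : Prop :=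
  [/\ p \top = \top /\ p \bot = \bot,
      (forall x y, p (x `&` y) = p x `&` p y),
      (forall x y, p (x `|` y) = p x `|` p y),
      (forall x, p (~` x) = ~` p x) &
      (forall x, p (g x) = g (p x))].

Definition Astar_retract d (A : ctbDistrLatticeType d) (g : A -> A) : Prop :=
  exists p : A -> A,
    [/\ (forall x, Astar g (p x)),
        interior_hom g p,
        (forall y, Astar g y -> exists x, p x = y) &
        (forall x, Astar g x -> p x = x)].

(* Main.v *)
Require Import Defs.
From mathcomp Require Import all_boot all_order.
Import Order.Theory.
Local Open Scope order_scope.

Lemma le_of_imp d (A : ctbDistrLatticeType d) (x y : A) :
  ~` x `|` y = \top -> x `&` y = x.
Proof.
move=> h.
have -> : x = x `&` (~` x `|` y) by rewrite h meetx1.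
by rewrite meetUr meetxC join0x -meetA meetxx.
Qed.

Theorem lemma4p4 (d : Order.disp_t) (A : ctbDistrLatticeType d) (g : A -> A) :
  interior_op g -> Astar_retract g -> forall x : A, Astar g x.
Proof.
case=> g1 gM gle gg [p [pA [[p1 p0] pM pJ pC pg] _ pid]] x.
have key : forall u, p u = \top -> u = \top.
  move=> u pu.
  have ou : Astar g (g u) by apply: Astar_open; rewrite /is_open gg.
  have : g u = \top by rewrite -(pid _ ou) pg pu g1.
  move=> gu; apply/eqP; rewrite eq_le lex1 -gu; exact: gle.
have ppx : p (p x) = p x by apply: pid.
have h1 : x `&` p x = x.
  apply: le_of_imp; apply: key; by rewrite pJ pC ppx joinCx.
have h2 : p x `&` x = p x.
  apply: le_of_imp; apply: key; by rewrite pJ pC ppx joinCx.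
have -> : x = p x by rewrite -[LHS]h1 meetC h2.
exact: pA.
Qed.
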